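(* Let $K$ be any quadratic field. There is a constant $C>0$ depending only on $K$ such that for every natural number $f$, \[\mathsf{D}(\mathrm{PrinCl}(\mathcal{O}_f))\le C\,\frac{f}{\ell(f)}.\]
   Context: For a quadratic field $K$ with ring of integers $\mathcal{O}_K$ and $f\in\mathbb{N}$, the pre-class group is $\mathrm{PreCl}(\mathcal{O}_f):=(\mathcal{O}_K/f\mathcal{O}_K)^{\times}/\langle\text{images of integers coprime to } f\rangle$. Let $\mathcal{U}_f$ be the image of the unit group $\mathcal{O}_K^{\times}$ in $\mathrm{PreCl}(\mathcal{O}_f)$, $\ell(f):=\#\mathcal{U}_f$, and $\mathrm{PrinCl}(\mathcal{O}_f):=\mathrm{PreCl}(\mathcal{O}_f)/\mathcal{U}_f$ (equivalently, $(\mathcal{O}_K/f\mathcal{O}_K)^\times$ modulo the images of integers coprime to $f$ and of units of $\mathcal{O}_K$). For a finite abelian group $G$, the Davenport constant $\mathsf{D}(G)$ is the least positive integer $D$ such that every sequence $g_1,\dots,g_D$ of elements of $G$ has a nonempty subsequence whose product is the identity. *)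

(* Defs.v *)
From mathcomp Require Import all_boot all_order all_algebra.
From mathcomp Require Import boolp.
Unset Printing Implicit Defensive.
Import Order.TTheory GRing.Theory Num.Theory.
Local Open Scope ring_scope.

(* Every quadratic field is K = Q(sqrt d) for a unique
   squarefree integer d <> 0, 1.  Its ring of integers is O_K = Z[w] with
   w = (1 + sqrt d)/2 if d = 1 mod 4 and w = sqrt d otherwise; w satisfies
   w^2 = qt * w + qn.  We model O_K as Z x Z, (a, b) <-> a + b w.         *)

Definition squarefree_int (d : int) : Prop :=
  forall k : nat, (k * k %| `|d|)%N -> k = 1%N.

Definition quad_field_disc (d : int) : Prop :=
  [/\ d != 0, d != 1 & squarefree_int d].

Definition qt (d : int) : int := if (d %% 4)%Z == 1 then 1 else 0.
Definition qn (d : int) : int := if (d %% 4)%Z == 1 then ((d - 1) %/ 4)%Z else d.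

Definition mulO (d : int) (u v : int * int) : int * int :=
  (u.1 * v.1 + qn d * u.2 * v.2, u.1 * v.2 + u.2 * v.1 + qt d * u.2 * v.2).

Definition unitO (d : int) (u : int * int) : Prop :=
  exists v : int * int, mulO d u v = (1, 0).

(* The residue ring O_K / f O_K, with f = m.+1 >= 1; residues of a + b w
   are pairs (a mod f, b mod f).                                        *)

Definition Res (m : nat) : finType := ('I_m.+1 * 'I_m.+1)%type.

Definition toRes (m : nat) (u : int * int) : Res m :=
  (inZp `|(u.1 %% (m.+1)%:Z)%Z|, inZp `|(u.2 %% (m.+1)%:Z)%Z|).

Definition ofRes (m : nat) (x : Res m) : int * int :=
  ((nat_of_ord x.1)%:Z, (nat_of_ord x.2)%:Z).

Definition mulR (d : int) (m : nat) (x y : Res m) : Res m :=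
  toRes m (mulO d (ofRes m x) (ofRes m y)).

Definition oneR (m : nat) : Res m := toRes m (1, 0).

Definition unitR (d : int) (m : nat) (x : Res m) : bool :=
  [exists y, mulR d m x y == oneR m].

Definition prodR (d : int) (m : nat) (s : seq (Res m)) : Res m :=
  foldr (mulR d m) (oneR m) s.

Definition intImg (m : nat) : {set Res m} :=
  [set x | `[< exists k : int, coprime `|k| m.+1 /\ x = toRes m (k, 0) >]].

Definition unitImg (d : int) (m : nat) : {set Res m} :=
  [set x | `[< exists u : int * int, unitO d u /\ x = toRes m u >]].

Definition subgrp_closed (d : int) (m : nat) (A S : {set Res m}) : bool :=
  [&& oneR m \in S,
      [forall x in S, forall y in S, mulR d m x y \in S],
      [forall x in S, forall y, (mulR d m x y == oneR m) ==> (y \in S)]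
    & A \subset S].

Definition gen_subgrp (d : int) (m : nat) (A : {set Res m}) : {set Res m} :=
  \bigcap_(S : {set Res m} | subgrp_closed d m A S) S.

(* Z_f : the subgroup defining PreCl ; H_f : the one defining PrinCl *)
Definition Zsub (d : int) (m : nat) : {set Res m} := gen_subgrp d m (intImg m).
Definition Hsub (d : int) (m : nat) : {set Res m} :=
  gen_subgrp d m (intImg m :|: unitImg d m).

(* class of x in PreCl = (O_K/fO_K)^x / Z_f *)
Definition preCl_class (d : int) (m : nat) (x : Res m) : {set Res m} :=
  [set y | [exists z in Zsub d m, y == mulR d m x z]].

(* ell(f) = # U_f, the number of classes in PreCl hit by units of O_K *)
Definition ell (d : int) (m : nat) : nat :=
  #|[set preCl_class d m x | x in unitImg d m]|.

(* D is a "zero-sum length" for PrinCl = (O_K/fO_K)^x / H_f : every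
   sequence of D elements of PrinCl (lifted to units of O_K/fO_K) has a
   nonempty subsequence whose product is the identity class, i.e. lies
   in H_f. *)
Definition prinCl_zs (d : int) (m : nat) (D : nat) : Prop :=
  forall s : seq (Res m), size s = D -> all (unitR d m) s ->
    exists msk : bitseq, [/\ size msk = size s, has id msk &
                             prodR d m (mask msk s) \in Hsub d m].

(* Davenport constant: the least positive such D (0 if none, which never
   happens for a finite group). *)
Definition davenport_prinCl (d : int) (m : nat) : nat :=
  match pselect (exists D : nat, `[< (0 < D)%N /\ prinCl_zs d m D >]) with
  | left h => ex_minn h
  | right _ => 0%N
  end.

(* Main.v *)
Require Import Defs.
From mathcomp Require Import all_boot all_order all_algebra all_field.
From mathcomp Require Import boolp.
From mathcomp Require Import zify ring lra.
Set Implicit Arguments.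
Unset Strict Implicit.
Unset Printing Implicit Defensive.
Import Order.TTheory GRing.Theory Num.Theory.

Local Open Scope ring_scope.

Definition congr (M a b : int) := exists k : int, a = b + k * M.

Lemma congr_refl M a : congr M a a.
Proof. by exists 0; rewrite mul0r addr0. Qed.
Lemma congr_sym M a b : congr M a b -> congr M b a.
Proof. by case=> k ->; exists (- k); ring. Qed.
Lemma congr_trans M a b c : congr M a b -> congr M b c -> congr M a c.
Proof. by case=> k ->; case=> l ->; exists (k + l); ring. Qed.
Lemma congrD M a b a' b' : congr M a a' -> congr M b b' -> congr M (a + b) (a' + b').
Proof. by case=> k ->; case=> l ->; exists (k + l); ring. Qed.
Lemma congrN M a a' : congr M a a' -> congr M (- a) (- a').
Proof. by case=> k ->; exists (- k); ring. Qed.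
Lemma congrB M a b a' b' : congr M a a' -> congr M b b' -> congr M (a - b) (a' - b').
Proof. by move=> h1 h2; apply: congrD => //; apply: congrN. Qed.
Lemma congrM M a b a' b' : congr M a a' -> congr M b b' -> congr M (a * b) (a' * b').
Proof. by case=> k ->; case=> l ->; exists (k * b' + a' * l + k * l * M); ring. Qed.
Lemma congr_dvd M M' a b : (M' %| M)%Z -> congr M a b -> congr M' a b.
Proof. by case/dvdzP=> q -> [k ->]; exists (k * q); ring. Qed.

Section Res.
Variables (d : int) (m : nat).
Local Notation f := (m.+1)%:Z.

Lemma toRes_congr u v : congr f u.1 v.1 -> congr f u.2 v.2 -> toRes m u = toRes m v.
Proof.
case=> k1 e1 [k2 e2]; rewrite /toRes e1 e2.
by rewrite [v.1 + _]addrC [v.2 + _]addrC !modzMDl.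
Qed.

Lemma ofRes_toRes1 u : congr f (ofRes m (toRes m u)).1 u.1.
Proof.
rewrite /ofRes /toRes /=.
have h0 : (0 <= (u.1 %% f)%Z) by apply: modz_ge0.
have h1 : ((u.1 %% f)%Z < f) by apply: ltz_pmod.
rewrite modn_small; last by rewrite -ltz_nat gez0_abs.
rewrite gez0_abs //; exists (- (u.1 %/ f)%Z); rewrite {2}(divz_eq u.1 f); ring.
Qed.

Lemma ofRes_toRes2 u : congr f (ofRes m (toRes m u)).2 u.2.
Proof.
rewrite /ofRes /toRes /=.
have h0 : (0 <= (u.2 %% f)%Z) by apply: modz_ge0.
have h1 : ((u.2 %% f)%Z < f) by apply: ltz_pmod.
rewrite modn_small; last by rewrite -ltz_nat gez0_abs.
rewrite gez0_abs //; exists (- (u.2 %/ f)%Z); rewrite {2}(divz_eq u.2 f); ring.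
Qed.

Lemma toRes_ofRes x : toRes m (ofRes m x) = x.
Proof.
case: x => i j; rewrite /toRes /ofRes /=.
rewrite !modz_nat !absz_nat.
by congr (_, _); apply: val_inj; rewrite /= modn_small // ?ltn_ord //; rewrite modn_small.
Qed.

End Res.

Local Close Scope ring_scope.

Local Open Scope ring_scope.

Definition normO (d : int) (u : int * int) : int :=
  u.1 * u.1 + qt d * u.1 * u.2 - qn d * u.2 * u.2.
Definition conjO (d : int) (u : int * int) : int * int := (u.1 + qt d * u.2, - u.2).

Section Arith.
Variable d : int.

Lemma mulO_congr M u u' v v' : congr M u.1 u'.1 -> congr M u.2 u'.2 ->
  congr M v.1 v'.1 -> congr M v.2 v'.2 ->
  congr M (mulO d u v).1 (mulO d u' v').1 /\ congr M (mulO d u v).2 (mulO d u' v').2.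
Proof.
move=> h1 h2 h3 h4; rewrite /mulO /=; split;
  repeat first [eassumption | apply: congrD | apply: congrM | apply: congr_refl].
Qed.

Lemma normO_congr M u u' : congr M u.1 u'.1 -> congr M u.2 u'.2 ->
  congr M (normO d u) (normO d u').
Proof.
move=> h1 h2; rewrite /normO /=;
  repeat first [eassumption | apply: congrB | apply: congrD | apply: congrM | apply: congr_refl].
Qed.

Lemma mulOC u v : mulO d u v = mulO d v u.
Proof. by case: u v => a b [c e]; rewrite /mulO /=; congr (_, _); ring. Qed.
Lemma mulOA u v w : mulO d u (mulO d v w) = mulO d (mulO d u v) w.
Proof. by case: u v w => a b [c e] [g h]; rewrite /mulO /=; congr (_, _); ring. Qed.
Lemma mul1O u : mulO d (1, 0) u = u.
Proof. by case: u => a b; rewrite /mulO /=; congr (_, _); ring. Qed.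
Lemma normO_mul u v : normO d (mulO d u v) = normO d u * normO d v.
Proof. by case: u v => a b [c e]; rewrite /normO /mulO /=; ring. Qed.
Lemma mulO_conj u : mulO d u (conjO d u) = (normO d u, 0).
Proof. by case: u => a b; rewrite /normO /mulO /conjO /=; congr (_, _); ring. Qed.
Lemma normO1 : normO d (1, 0) = 1.
Proof. by rewrite /normO /=; ring. Qed.

Variable m : nat.
Local Notation f := (m.+1)%:Z.
Local Notation mulR := (mulR d m).
Local Notation one := (oneR m).

Lemma mulR_toRes u v : mulR (toRes m u) (toRes m v) = toRes m (mulO d u v).
Proof.
rewrite /mulR; have [h1 h2] := mulO_congr (ofRes_toRes1 m u) (ofRes_toRes2 m u)
   (ofRes_toRes1 m v) (ofRes_toRes2 m v).
exact: toRes_congr.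
Qed.

Lemma mulRC x y : mulR x y = mulR y x.
Proof. by rewrite /mulR mulOC. Qed.

Lemma mulRA x y z : mulR x (mulR y z) = mulR (mulR x y) z.
Proof.
rewrite -[x]toRes_ofRes -[y]toRes_ofRes -[z]toRes_ofRes.
by rewrite !mulR_toRes mulOA.
Qed.

Lemma mul1R x : mulR one x = x.
Proof. by rewrite -[x]toRes_ofRes /oneR mulR_toRes mul1O. Qed.
Lemma mulR1 x : mulR x one = x.
Proof. by rewrite mulRC mul1R. Qed.

Lemma unitRP x : reflect (exists y, mulR x y = one) (unitR d m x).
Proof. by apply: (iffP existsP) => -[y /eqP h]; exists y. Qed.

Lemma unitR1 : unitR d m one.
Proof. by apply/unitRP; exists one; rewrite mul1R. Qed.

Lemma unitRM x y : unitR d m x -> unitR d m y -> unitR d m (mulR x y).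
Proof.
move=> /unitRP[x' hx] /unitRP[y' hy]; apply/unitRP; exists (mulR x' y').
by rewrite mulRA -[mulR (mulR x y) x']mulRA [mulR y x']mulRC mulRA hx mul1R hy.
Qed.

Lemma unitR_inv x y : mulR x y = one -> unitR d m y.
Proof. by move=> h; apply/unitRP; exists x; rewrite mulRC. Qed.

Lemma unitR_cancel x y z : unitR d m x -> mulR x y = mulR x z -> y = z.
Proof.
move=> /unitRP[x' hx] e.
by rewrite -[y]mul1R -[z]mul1R -hx [mulR x x']mulRC -!mulRA e.
Qed.

Lemma closedP (A S : {set Res m}) : reflect [/\ one \in S,
   forall x y, x \in S -> y \in S -> mulR x y \in S,
   forall x y, x \in S -> mulR x y = one -> y \in S & A \subset S]
  (subgrp_closed d m A S).
Proof.
apply: (iffP and4P) => -[h1 h2 h3 h4]; split => //.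
- by move=> x y xS yS; move/forall_inP: h2 => /(_ x xS) /forall_inP /(_ y yS).
- by move=> x y xS e; move/forall_inP: h3 => /(_ x xS) /forallP /(_ y) /implyP; apply; apply/eqP.
- by apply/forall_inP => x xS; apply/forall_inP => y yS; apply: h2.
- by apply/forall_inP => x xS; apply/forallP => y; apply/implyP => /eqP; apply: h3.
Qed.

Lemma gen_min (A S : {set Res m}) : subgrp_closed d m A S -> gen_subgrp d m A \subset S.
Proof. by move=> h; apply: bigcap_inf. Qed.

Lemma gen_closed (A : {set Res m}) : subgrp_closed d m A (gen_subgrp d m A).
Proof.
apply/closedP; split.
- by apply/bigcapP => S /closedP[].
- by move=> x y /bigcapP hx /bigcapP hy; apply/bigcapP => S hS;
    case/closedP: (hS) => _ h _ _; apply: h; [apply: hx | apply: hy].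
- by move=> x y /bigcapP hx e; apply/bigcapP => S hS;
    case/closedP: (hS) => _ _ h _; apply: h e; apply: hx.
- by apply/subsetP => x xA; apply/bigcapP => S /closedP[_ _ _ /subsetP]; apply.
Qed.

Lemma gen1 (A : {set Res m}) : one \in gen_subgrp d m A.
Proof. by case/closedP: (gen_closed A). Qed.
Lemma genM (A : {set Res m}) x y : x \in gen_subgrp d m A -> y \in gen_subgrp d m A ->
  mulR x y \in gen_subgrp d m A.
Proof. by case/closedP: (gen_closed A) => _ h _ _; apply: h. Qed.
Lemma genV (A : {set Res m}) x y : x \in gen_subgrp d m A -> mulR x y = one -> y \in gen_subgrp d m A.
Proof. by case/closedP: (gen_closed A) => _ _ h _; apply: h. Qed.
Lemma genA (A : {set Res m}) : A \subset gen_subgrp d m A.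
Proof. by case/closedP: (gen_closed A). Qed.

Lemma gen_unit (A : {set Res m}) x : A \subset [set y | unitR d m y] -> x \in gen_subgrp d m A ->
  unitR d m x.
Proof.
move=> hA hx; suff : x \in [set y | unitR d m y] by rewrite inE.
apply: (subsetP (gen_min _)) hx; apply/closedP; split => //.
- by rewrite inE unitR1.
- by move=> x' y; rewrite !inE; apply: unitRM.
- by move=> x' y _; rewrite inE => /unitR_inv.
Qed.

Lemma gen_mono (A B : {set Res m}) : A \subset B -> gen_subgrp d m A \subset gen_subgrp d m B.
Proof.
move=> hAB; apply: gen_min; case/closedP: (gen_closed B) => h1 h2 h3 h4.
by apply/closedP; split => //; apply: subset_trans h4.
Qed.

End Arith.

Local Close Scope ring_scope.


Section Comb.
Variables (d : int) (m : nat).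
Local Notation mulR := (mulR d m).
Local Notation one := (oneR m).
Local Notation prodR := (prodR d m).
Local Notation unit := (unitR d m).

Lemma prodR_nil : prodR [::] = one. Proof. by []. Qed.
Lemma prodR_cons x s : prodR (x :: s) = mulR x (prodR s). Proof. by []. Qed.

Lemma prodR_cat s1 s2 : prodR (s1 ++ s2) = mulR (prodR s1) (prodR s2).
Proof.
elim: s1 => [|x s1 IH] /=; first by rewrite mul1R.
by rewrite IH mulRA.
Qed.

Lemma prodR_in (S : {set Res m}) s : one \in S ->
  (forall x y, x \in S -> y \in S -> mulR x y \in S) -> all (mem S) s -> prodR s \in S.
Proof.
move=> h1 hM; elim: s => [|x s IH] //= /andP[xS sS].
by apply: hM => //; apply: IH.
Qed.

Lemma prodR_unit s : all unit s -> unitR d m (prodR s).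
Proof.
elim: s => [|x s IH] /=; first by rewrite unitR1.
by move=> /andP[hx hs]; apply: unitRM => //; apply: IH.
Qed.

Lemma all_mask (P : pred (Res m)) msk s : all P s -> all P (mask msk s).
Proof. by move=> h; apply/allP => x /mem_mask /(allP h). Qed.

Lemma seg_step (A : {set Res m}) (t : seq (Res m)) n i j h1 h2 :
  A \subset [set y | unit y] -> size t = n -> all unit t ->
  (i < j)%N -> (j <= n)%N -> h1 \in gen_subgrp d m A -> h2 \in gen_subgrp d m A ->
  mulR (prodR (take i t)) h1 = mulR (prodR (take j t)) h2 ->
  exists msk, [/\ size msk = n, has id msk & prodR (mask msk t) \in gen_subgrp d m A].
Proof.
move=> hA st ut lij ljn hh1 hh2 e.
set seg := drop i (take j t).
have ht : take j t = take i t ++ seg.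
  by rewrite /seg -{1}(cat_take_drop i (take j t)) take_takel // ltnW.
have ui : unit (prodR (take i t)).
  by apply: prodR_unit; rewrite -(cat_take_drop i t) all_cat in ut; case/andP: ut.
rewrite ht prodR_cat -mulRA in e.
have e2 := unitR_cancel ui e.
have [h2' hh2'] : exists h2', mulR h2 h2' = one by apply/unitRP; apply: gen_unit hh2.
have segH : prodR seg \in gen_subgrp d m A.
  have -> : prodR seg = mulR h1 h2'.
    by rewrite e2 -mulRA hh2' mulR1.
  by apply: genM => //; apply: genV hh2 hh2'.
exists (nseq i false ++ nseq (j - i) true ++ nseq (n - j) false); split.
- rewrite !size_cat !size_nseq; lia.
- rewrite !has_cat !has_nseq /=.
  by rewrite !andbF andbT /= orbF subn_gt0.
- have sseg : size seg = (j - i)%N by rewrite /seg size_drop size_take st; case: ltnP => //; lia.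
  rewrite -(cat_take_drop j t) ht -catA.
  rewrite mask_cat ?size_nseq ?size_take ?st; last by case: ltnP => //; lia.
  rewrite mask_cat ?size_nseq ?size_drop ?st ?sseg //; last first.
    by rewrite size_take st; case: ltnP => //; lia.
  by rewrite mask_false mask_true ?sseg // mask_false cats0.
Qed.

Lemma pigeon (A K : {set Res m}) (t : seq (Res m)) n :
  A \subset [set y | unit y] -> gen_subgrp d m A \subset K ->
  one \in K -> (forall x y, x \in K -> y \in K -> mulR x y \in K) ->
  K \subset [set y | unit y] ->
  (#|K| < n.+1 * #|gen_subgrp d m A|)%N ->
  size t = n -> all (mem K) t ->
  exists msk, [/\ size msk = n, has id msk & prodR (mask msk t) \in gen_subgrp d m A].
Proof.
move=> hA HK K1 KM Ku hcard st tK.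
have ut : all unit t by apply/allP => x /(allP tK) /(subsetP Ku); rewrite inE.
set H := gen_subgrp d m A.
pose P (i : 'I_n.+1) := prodR (take i t).
have PK i : P i \in K.
  apply: prodR_in => //; apply/allP => x /mem_take; exact: (allP tK).
pose g (p : 'I_n.+1 * Res m) := mulR (P p.1) p.2.
apply: contrapT => hno.
have inj : {in setX [set: 'I_n.+1] H &, injective g}.
  move=> [i h1] [j h2] /setXP[_ hh1] /setXP[_ hh2]; rewrite /g /= => e.
  case: (ltngtP i j) => lij.
  - exfalso; apply: hno; apply: (seg_step (h1:=h1) (h2:=h2) hA st ut lij) => //.
    by rewrite -ltnS ltn_ord.
  - exfalso; apply: hno; apply: (seg_step (h1:=h2) (h2:=h1) hA st ut lij) => //.
    by rewrite -ltnS ltn_ord.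
  - have ij : i = j by apply: val_inj.
    subst j; congr (_, _); apply: (unitR_cancel _ e).
    apply: prodR_unit; apply/allP => x /mem_take; exact: (allP ut).
have := card_in_imset inj; rewrite cardsX cardsT card_ord => hc.
have : (#|[set g x | x in setX [set: 'I_n.+1] H]| <= #|K|)%N.
  apply: subset_leq_card; apply/subsetP => y /imsetP[[i h] /setXP[_ hh] ->].
  by apply: KM => //; apply: (subsetP HK).
by rewrite hc leqNgt hcard.
Qed.

Lemma blocks_aux (K : {set Res m}) L :
  (forall t, size t = L -> all unit t ->
     exists msk, [/\ size msk = L, has id msk & prodR (mask msk t) \in K]) ->
  forall k s, size s = (L * k)%N -> all unit s ->
  exists bs, [/\ size bs = k, all (mem K) bs &
    forall mu, size mu = k -> exists msk, [/\ size msk = size s, has id mu -> has id msk &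
       prodR (mask msk s) = prodR (mask mu bs)]].
Proof.
move=> Q1; elim=> [|k IH] s ss us.
  exists [::]; split => // mu; rewrite muln0 in ss; move/size0nil: ss => ->.
  by move/size0nil => ->; exists [::].
have sL : size (take L s) = L by rewrite size_take ss; case: ltnP => //; lia.
have sD : size (drop L s) = (L * k)%N by rewrite size_drop ss; lia.
move: us; rewrite -(cat_take_drop L s) all_cat => /andP[u1 u2].
have [m0 [sm0 hm0 pm0]] := Q1 _ sL u1.
have [bs [sbs Kbs F]] := IH _ sD u2.
exists (prodR (mask m0 (take L s)) :: bs); split => //=; first by rewrite sbs.
  by rewrite pm0.
case=> [|mu0 mu] //= [smu].
have [msk' [sm' hm' pm']] := F _ smu.
exists ((if mu0 then m0 else nseq L false) ++ msk'); split.
- by rewrite size_cat sm' size_cat; case: mu0; rewrite ?size_nseq ?sm0 ?sL.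
- by case: mu0 => /= h; rewrite has_cat ?hm0 // hm' ?orbT.
- rewrite mask_cat; last by case: mu0; rewrite ?size_nseq ?sm0 ?sL.
  rewrite prodR_cat pm'; case: mu0 => //=.
  by rewrite mask_false mul1R.
Qed.

Lemma blocks (H K : {set Res m}) L n :
  (forall t, size t = L -> all unit t ->
     exists msk, [/\ size msk = L, has id msk & prodR (mask msk t) \in K]) ->
  (forall t, size t = n -> all (mem K) t ->
     exists msk, [/\ size msk = n, has id msk & prodR (mask msk t) \in H]) ->
  forall s, size s = (L * n)%N -> all unit s ->
    exists msk, [/\ size msk = size s, has id msk & prodR (mask msk s) \in H].
Proof.
move=> Q1 Q2 s ss us.
have [bs [sbs Kbs F]] := blocks_aux Q1 ss us.
have [mu [smu hmu pmu]] := Q2 _ sbs Kbs.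
have [msk [sm hm pm]] := F _ smu.
by exists msk; split => //; [apply: hm | rewrite pm].
Qed.

Lemma davenport_le N : (0 < N)%N -> prinCl_zs d m N -> (davenport_prinCl d m <= N)%N.
Proof.
move=> N0 hN; rewrite /davenport_prinCl; case: pselect => [h|[]]; last first.
  by exists N; apply/asboolP.
case: ex_minnP => k _ hk; apply: hk; apply/asboolP; split => //.
Qed.

End Comb.

Local Open Scope ring_scope.

Lemma mask_sum (V : nmodType) (msk : bitseq) (v : seq V) : size msk = size v ->
  \sum_(x <- mask msk v) x = \sum_(j < size v) (if nth false msk j then nth 0 v j else 0).
Proof.
elim: v msk => [|x v IH] [|b msk] //=; first by rewrite big_nil big_ord0.
case=> sm; rewrite big_ord_recl /=.
by case: b; rewrite /= ?big_cons IH // add0r.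
Qed.

Lemma F2_cases (x : 'F_2) : x = 0 \/ x = 1.
Proof.
case: x => [[|[|k]] Hk]; [left|right|] => //.
- exact: val_inj.
- exact: val_inj.
Qed.

Lemma F2_dep s (v : seq 'rV['F_2]_s) : size v = s.+1 ->
  exists msk, [/\ size msk = s.+1, has id msk & \sum_(x <- mask msk v) x = 0].
Proof.
move=> sv.
pose M := \matrix_(i < s.+1) nth 0 v i.
have nf : ~~ row_free M by rewrite -row_leq_rank -ltnNge ltnS rank_leq_col.
have K0 : kermx M != 0 by rewrite kermx_eq0.
have [i hi] : exists i, row i (kermx M) != 0.
  case: (pickP (fun i => row i (kermx M) != 0)) => [i hi|h]; first by exists i.
  exfalso; move/eqP: K0; apply; apply/row_matrixP => i; rewrite row0.
  by apply/eqP; move: (h i) => /= /negbFE.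
set u := row i (kermx M).
have uM : u *m M = 0 by rewrite -row_mul mulmx_ker row0.
have [j0 hj0] : exists j, u 0 j != 0.
  case: (pickP (fun j => u 0 j != 0)) => [j hj|h]; first by exists j.
  exfalso; move/eqP: hi; apply; apply/rowP => j.
  have := h j => /= /negbFE /eqP e; rewrite [RHS]mxE; exact: e.
exists (mkseq (fun j => u 0 (inord j) != 0) s.+1); split.
- by rewrite size_mkseq.
- apply/hasP; exists (u 0 (inord j0) != 0); last by rewrite inord_val.
  by apply/mapP; exists (nat_of_ord j0) => //; rewrite mem_iota /= ltn_ord.
- rewrite mask_sum ?size_mkseq ?sv //.
  rewrite -[RHS]uM mulmx_sum_row; apply: eq_bigr => j _.
  rewrite nth_mkseq // inord_val rowK.
  by case: (F2_cases (u 0 j)) => ->; rewrite ?eqxx ?scale0r ?scale1r //; rewrite oner_eq0.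
Qed.

Local Close Scope ring_scope.

Local Open Scope ring_scope.

Section Fp.
Variable p : nat.
Hypothesis pp : prime p.
Hypothesis po : odd p.

Lemma Fp_nat_eq0 n : ((n%:R : 'F_p) == 0) = (p %| n)%N.
Proof. by rewrite (dvdn_pcharf (pchar_Fp pp)). Qed.

Lemma Fp_int_eq0 (z : int) : ((z%:~R : 'F_p) == 0) = (p %| `|z|)%N.
Proof.
case: z => n; first by rewrite -Fp_nat_eq0.
by rewrite NegzE rmorphN /= oppr_eq0 -Fp_nat_eq0.
Qed.

Lemma congr_Fp (M a b : int) : (p%:Z %| M)%Z -> congr M a b -> (a%:~R : 'F_p) = b%:~R.
Proof.
move=> hM /(congr_dvd hM) [k ->]; rewrite rmorphD rmorphM /=.
have -> : ((p%:Z)%:~R : 'F_p) = 0 by apply/eqP; rewrite Fp_int_eq0 absz_nat.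
by rewrite mulr0 addr0.
Qed.

Lemma two_neq0 : (2%:R : 'F_p) != 0.
Proof.
rewrite Fp_nat_eq0; apply/negP => /(dvdn_leq (isT : (0 < 2)%N)).
have := prime_gt1 pp; case: p po => [|[|[|q]]] //.
Qed.

Lemma neg1_neq1 : (-1 : 'F_p) != 1.
Proof.
apply/negP => /eqP e; have := two_neq0; rewrite -[2%:R]/(1 + 1 : 'F_p).
by rewrite -{1}e addNr eqxx.
Qed.

Lemma Fp_fermat (a : 'F_p) : a != 0 -> a ^+ p.-1 = 1.
Proof.
move=> a0; have := expf_card a; rewrite card_Fp // => e.
have : a * a ^+ p.-1 = a * 1 by rewrite mulr1 -exprS prednK ?prime_gt0.
exact: mulfI.
Qed.

Definition hp := p.-1./2.

Lemma hp_double : (hp + hp)%N = p.-1.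
Proof.
rewrite /hp addnn; have := odd_double_half p.-1.
have -> : odd p.-1 = false by move: po (prime_gt0 pp); case: p => [|q] //= /negbTE.
by rewrite add0n.
Qed.

Lemma euler (a : 'F_p) : a != 0 -> a ^+ hp = 1 \/ a ^+ hp = -1.
Proof.
move=> a0; have e : (a ^+ hp - 1) * (a ^+ hp + 1) = 0.
  by rewrite mulrDr mulr1 mulrBl -exprD hp_double Fp_fermat //; ring.
move/eqP: e; rewrite mulf_eq0 => /orP[/eqP h|/eqP h]; [left|right].
- by apply/eqP; rewrite -subr_eq0 h.
- by apply/eqP; rewrite -addr_eq0 h.
Qed.

Lemma hp_gt0 : (0 < hp)%N.
Proof.
rewrite /hp; have := prime_gt1 pp; case: p po => [|[|[|q]]] //=.
Qed.

Lemma nonres_exists : exists r : 'F_p, r ^+ hp = -1.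
Proof.
have [r [r0 r1]] : exists r : 'F_p, r != 0 /\ r ^+ hp != 1.
  apply: contrapT => hno.
  have sub : [set~ (0 : 'F_p)] \subset [set x : 'F_p | x ^+ hp == 1].
    apply/subsetP => x; rewrite !inE => x0; apply: contrapT => /negP hx.
    by apply: hno; exists x.
  have := subset_leq_card sub; rewrite cardsC1 card_Fp //.
  have : (#|[set x : 'F_p | x ^+ hp == 1%R]| <= hp)%N.
    rewrite cardE; apply: max_unity_roots; first exact: hp_gt0.
      by apply/allP => x; rewrite mem_enum inE unity_rootE.
    exact: enum_uniq.
  move=> h1 h2; have := leq_trans h2 h1; rewrite /hp.
  have := prime_gt1 pp; move: po; clear; rewrite -divn2; lia.
exists r; by case: (euler r0) => // e; rewrite e eqxx in r1.
Qed.

Lemma quad_image (c k : 'F_p) : k != 0 ->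
  (p < 2 * #|[set (c + k * y * y)%R | y : 'F_p]|)%N.
Proof.
move=> k0; set I := [set _ | _ : 'F_p].
have fib z : (#|[set y : 'F_p | (c + k * y * y == z)%R]| <= 2)%N.
  case: (pickP (fun y : 'F_p => c + k * y * y == z)) => [y0 hy0|h]; last first.
    by rewrite (eq_card0 (A := [set y | _])) // => y; rewrite inE h.
  have : [set y : 'F_p | c + k * y * y == z] \subset [set y0; - y0].
    apply/subsetP => y; rewrite !inE => hy.
    move/eqP: hy0 => hy0; move/eqP: hy => hy.
    have e : (y - y0) * (y + y0) = 0.
      have : k * ((y - y0) * (y + y0)) = 0 by rewrite -[0](subrr z) -{1}hy -hy0; ring.
      by move/eqP; rewrite mulf_eq0 (negbTE k0) /= => /eqP.
    move/eqP: e; rewrite mulf_eq0 => /orP[|] /eqP h.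
    + by apply/orP; left; rewrite -subr_eq0 h.
    + by apply/orP; right; rewrite -addr_eq0 h.
  move/subset_leq_card; rewrite cards2 => h; apply: leq_trans h _; by case: (_ != _).
have : (#|'F_p| <= 2 * #|I|)%N.
  have -> : #|'F_p| = (\sum_(y : 'F_p) 1)%N by rewrite sum1_card.
  rewrite (partition_big (fun y => c + k * y * y) (mem I)) /=; last first.
    by move=> y _; apply/imsetP; exists y.
  rewrite mulnC -sum_nat_const; apply: leq_sum => z0 _.
  apply: leq_trans (fib z0); rewrite sum1_card; apply: eq_leq; apply: eq_card => y.
  by rewrite inE.
rewrite card_Fp // leq_eqVlt => /orP[/eqP e|//].
have o : odd (2 * #|I|) by rewrite -e.
by rewrite oddM in o.
Qed.

Lemma norm_repr (t n r : 'F_p) : t * t + 4%:R * n != 0 ->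
  exists a b : 'F_p, a * a + t * a * b - n * b * b = r.
Proof.
move=> D0; set D := t * t + 4%:R * n.
have h1 := quad_image 0 (oner_neq0 'F_p).
have h2 := quad_image (4%:R * r) D0.
set A := [set _ | _ : 'F_p] in h1; set B := [set _ | _ : 'F_p] in h2.
have [z] : exists z, z \in A :&: B.
  apply/set0Pn; apply/eqP => AB.
  have e : #|A :|: B| = (#|A| + #|B|)%N by rewrite cardsU AB cards0 subn0.
  have := max_card (A :|: B); rewrite card_Fp // => hc.
  move: h1 h2 hc; rewrite e; lia.
rewrite inE => /andP[/imsetP[X _ ->] /imsetP[Y _ e]].
have t2 := two_neq0.
exists ((X - t * Y) / 2%:R), Y.
have e' : X * X = 4%:R * r + D * Y * Y by rewrite -e; ring.
have -> : r = (X * X - D * Y * Y) / 4%:R.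
  rewrite e'; field.
  have -> : (4%:R : 'F_p) = 2%:R * 2%:R by rewrite -natrM.
  by rewrite mulf_neq0.
rewrite /D; field.
have -> : (4%:R : 'F_p) = 2%:R * 2%:R by rewrite -natrM.
by rewrite mulf_neq0.
Qed.

End Fp.

Local Close Scope ring_scope.

Local Open Scope ring_scope.

Lemma int_mul_eq1 (a b : int) : a * b = 1 -> a = 1 \/ a = -1.
Proof.
move=> e; have : (`|a| * `|b|)%N = 1%N by rewrite -abszM e.
move/eqP; rewrite muln_eq1 => /andP[/eqP ha _].
by case: a {e} ha => n /= h; [left; rewrite h | right; case: n h => [|n] //= _; rewrite NegzE].
Qed.

Lemma nat_mod_congr (M a b : nat) : a = b %[mod M] -> congr M%:Z a%:Z b%:Z.
Proof.
move=> e; exists ((a %/ M)%:Z - (b %/ M)%:Z).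
have ha : (a%:Z) = (a %/ M)%:Z * M%:Z + (a %% M)%:Z by rewrite -PoszM -PoszD -divn_eq.
have hb : (b%:Z) = (b %/ M)%:Z * M%:Z + (b %% M)%:Z by rewrite -PoszM -PoszD -divn_eq.
rewrite ha hb e; ring.
Qed.

Definition Np (d : int) (m p : nat) (x : Res m) : 'F_p := (normO d (ofRes m x))%:~R.
Definition chi (d : int) (m p : nat) (x : Res m) : bool := Np d p x ^+ hp p != 1.

Section Chi.
Variables (d : int) (m : nat).
Local Notation f := (m.+1).
Local Notation mulR := (mulR d m).
Local Notation one := (oneR m).

Lemma unit_of_norm u : coprimez (normO d u) f%:Z -> unitR d m (toRes m u).
Proof.
case/coprimezP => -[a b] /= e.
apply/unitRP; exists (toRes m (mulO d (conjO d u) (a, 0))).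
rewrite mulR_toRes mulOA mulO_conj /oneR; apply: toRes_congr => /=.
  by exists (- b); rewrite -e; ring.
by exists 0; ring.
Qed.

Variable p : nat.
Hypotheses (pp : prime p) (po : odd p) (pf : (p %| f)%N).

Lemma Np_toRes u : Np d p (toRes m u) = (normO d u)%:~R.
Proof.
apply: (congr_Fp pp (M := f%:Z)) => //.
exact: normO_congr (ofRes_toRes1 m u) (ofRes_toRes2 m u).
Qed.

Lemma Np_mul x y : Np d p (mulR x y) = Np d p x * Np d p y.
Proof. by rewrite /mulR Np_toRes normO_mul rmorphM. Qed.

Lemma Np_one : Np d p one = 1.
Proof. by rewrite /oneR Np_toRes normO1. Qed.

Lemma Np_unit x : unitR d m x -> Np d p x != 0.
Proof.
case/unitRP => y e; apply/negP => /eqP h.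
by have := Np_one; rewrite -e Np_mul h mul0r => /eqP; rewrite eq_sym oner_eq0.
Qed.

Lemma chi_mul x y : unitR d m x -> unitR d m y ->
  chi d p (mulR x y) = chi d p x (+) chi d p y.
Proof.
move=> ux uy; rewrite /chi Np_mul exprMn.
have n1 := neg1_neq1 pp po; have n1' : (1 : 'F_p) != -1 by rewrite eq_sym.
case: (euler pp po (Np_unit ux)) => ->; case: (euler pp po (Np_unit uy)) => ->;
  rewrite ?mulr1 ?mul1r ?mulrNN ?mulr1 ?eqxx ?(negbTE n1) //.
Qed.

Lemma chi_one : chi d p one = false.
Proof. by rewrite /chi Np_one expr1n eqxx. Qed.

End Chi.

Local Close Scope ring_scope.

Local Open Scope ring_scope.

Definition good (d : int) (p : nat) := odd p && ~~ (p %| `|d|)%N.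
Definition Pl d m := [seq p <- primes m.+1 | good d p].
Definition sP d m := size (Pl d m).
Definition Phi d m (x : Res m) : 'rV['F_2]_(sP d m) :=
  \row_(i < sP d m) (chi d (nth 0%N (Pl d m) i) x)%:R.
Definition wv d m : 'rV['F_2]_(sP d m) :=
  \row_(i < sP d m) (((-1 : 'F_(nth 0%N (Pl d m) i)) ^+ hp (nth 0%N (Pl d m) i) != 1))%:R.

Arguments Phi : clear implicits.
Arguments wv : clear implicits.

Lemma F2_addb (b1 b2 : bool) : ((b1 (+) b2)%:R : 'F_2) = b1%:R + b2%:R.
Proof. by case: b1; case: b2 => //; apply: val_inj. Qed.

Lemma F2_vv n (v : 'rV['F_2]_n) : v + v = 0.
Proof.
apply/rowP => i; rewrite !mxE; case: (F2_cases (v 0 i)) => ->; first by rewrite addr0.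
exact: val_inj.
Qed.

Section Phi.
Variables (d : int) (m : nat).
Local Notation f := (m.+1).
Local Notation mulR := (mulR d m).
Local Notation one := (oneR m).
Local Notation Pl := (Pl d m).
Local Notation s := (sP d m).
Local Notation Phi := (Phi d m).

Lemma Pl_prop p : p \in Pl -> [/\ prime p, odd p, ~~ (p %| `|d|)%N & (p %| f)%N].
Proof.
rewrite mem_filter mem_primes => /andP[/andP[go gd] /and3P[pp _ pf]].
by split.
Qed.

Lemma Pl_nth (i : 'I_s) : nth 0%N Pl i \in Pl.
Proof. exact: mem_nth. Qed.

Lemma Phi_mul x y : unitR d m x -> unitR d m y -> Phi (mulR x y) = Phi x + Phi y.
Proof.
move=> ux uy; apply/rowP => i; rewrite !mxE.
have [pp po _ pf] := Pl_prop (Pl_nth i).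
by rewrite chi_mul // F2_addb.
Qed.

Lemma Phi_one : Phi one = 0.
Proof.
apply/rowP => i; rewrite !mxE.
have [pp po _ pf] := Pl_prop (Pl_nth i).
by rewrite chi_one.
Qed.

Lemma Phi_inv x y : unitR d m x -> mulR x y = one -> Phi y = Phi x.
Proof.
move=> ux e; have uy := unitR_inv e.
have := Phi_one; rewrite -e Phi_mul // => h.
by rewrite -[Phi y]add0r -(F2_vv (Phi x)) -addrA h addr0.
Qed.

Definition Kset : {set Res m} :=
  [set x | unitR d m x && ((Phi x == 0) || (Phi x == wv d m))].

Lemma Kset_one : one \in Kset.
Proof. by rewrite inE unitR1 Phi_one eqxx. Qed.

Lemma Kset_mul x y : x \in Kset -> y \in Kset -> mulR x y \in Kset.
Proof.
rewrite !inE => /andP[ux hx] /andP[uy hy]; rewrite unitRM // Phi_mul //=.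
case/orP: hx => /eqP ->; case/orP: hy => /eqP ->;
  by rewrite ?addr0 ?add0r ?F2_vv ?eqxx ?orbT.
Qed.

Lemma Kset_unit : Kset \subset [set y | unitR d m y].
Proof. by apply/subsetP => x; rewrite !inE => /andP[]. Qed.

Lemma intImg_unit : intImg m \subset [set y | unitR d m y].
Proof.
apply/subsetP => x; rewrite !inE => /asboolP [k [ck ->]].
apply: unit_of_norm; rewrite /normO /= !mulr0 subr0 addr0 coprimezMl.
by rewrite coprimezE absz_nat ck.
Qed.

Lemma unitImg_unit : unitImg d m \subset [set y | unitR d m y].
Proof.
apply/subsetP => x; rewrite !inE => /asboolP [u [[v e] ->]].
by apply/unitRP; exists (toRes m v); rewrite mulR_toRes e.
Qed.

Lemma Hsub_K : Hsub d m \subset Kset.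
Proof.
apply: gen_min; apply/closedP; split.
- exact: Kset_one.
- exact: Kset_mul.
- move=> x y; rewrite !inE => /andP[ux hx] e.
  by rewrite (unitR_inv e) (Phi_inv ux e).
- apply/subsetP => x; rewrite in_setU => /orP[hx|hx].
  + have ux : unitR d m x by move/(subsetP intImg_unit): hx; rewrite inE.
    rewrite inE ux; apply/orP; left; apply/eqP/rowP => i; rewrite !mxE.
    move: hx; rewrite inE => /asboolP [k [ck ex]].
    have [pp po _ pf] := Pl_prop (Pl_nth i).
    have := Np_unit pp pf ux; rewrite /chi; rewrite ex Np_toRes //.
    rewrite /normO /= !mulr0 subr0 addr0 rmorphM /= => hk.
    rewrite -expr2 -exprM mul2n -addnn hp_double // Fp_fermat ?eqxx //.
    by apply: contraNneq hk => ->; rewrite mul0r.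
  + have ux : unitR d m x by move/(subsetP unitImg_unit): hx; rewrite inE.
    rewrite inE ux; move: hx; rewrite inE => /asboolP [u [[v e] ex]].
    have : normO d u * normO d v = 1 by rewrite -normO_mul e normO1.
    case/int_mul_eq1 => hn; apply/orP; [left|right]; apply/eqP/rowP => i; rewrite !mxE;
      have [pp po _ pf] := Pl_prop (Pl_nth i); rewrite /chi ex Np_toRes // hn.
    * by rewrite expr1n eqxx.
    * by [].
Qed.

End Phi.

Local Close Scope ring_scope.

Local Open Scope ring_scope.

Lemma disc_int (d : int) : qt d * qt d + 4 * qn d = d \/ qt d * qt d + 4 * qn d = 4 * d.
Proof.
rewrite /qt /qn; case: ifP => h; [left|right; ring].
have e2 : d = (d %/ 4)%Z * 4 + 1 by rewrite {1}(divz_eq d 4) (eqP h).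
have e : d - 1 = (d %/ 4)%Z * 4 by rewrite {1}e2; ring.
by rewrite e mulzK // [RHS]e2; ring.
Qed.

Section Surj.
Variables (d : int) (m : nat).
Hypothesis hd : quad_field_disc d.
Local Notation f := (m.+1).
Local Notation mulR := (mulR d m).
Local Notation one := (oneR m).
Local Notation Pl := (Pl d m).
Local Notation s := (sP d m).
Local Notation Phi := (Phi d m).

Lemma Phi_basis (i : 'I_s) :
  exists x, unitR d m x /\ forall j : 'I_s, chi d (nth 0%N Pl j) x = (j == i).
Proof.
set p := nth 0%N Pl i.
have [pp po pd pf] := Pl_prop (Pl_nth i).
pose t : 'F_p := (qt d)%:~R; pose n : 'F_p := (qn d)%:~R.
have hD : t * t + 4%:R * n != 0.
  have -> : t * t + 4%:R * n = (qt d * qt d + 4 * qn d)%:~R by rewrite /t /n !rmorphD !rmorphM.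
  have d0 : (d%:~R : 'F_p) != 0 by rewrite Fp_int_eq0.
  have f0 : (4%:R : 'F_p) != 0.
    have -> : (4%:R : 'F_p) = 2%:R * 2%:R by rewrite -natrM.
    by rewrite mulf_neq0 // two_neq0.
  by case: (disc_int d) => ->; rewrite ?rmorphM /= ?mulf_neq0.
have [r hr] := nonres_exists pp po.
have r0 : r != 0.
  apply/negP => /eqP r0; move: hr; rewrite r0 expr0n gtn_eqF ?hp_gt0 // => /eqP.
  by rewrite eq_sym oppr_eq0 oner_eq0.
have [a [b hab]] := norm_repr pp po r hD.
set M := (f`_p^')%N.
have cpM : coprime p M := pnat_coprime (pnat_id pp) (part_pnat _ _).
set X1 := chinese p M (val a) 1; set X2 := chinese p M (val b) 0.
have c1 : congr p X1 (val a) := nat_mod_congr (chinese_modl cpM _ _).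
have c2 : congr p X2 (val b) := nat_mod_congr (chinese_modl cpM _ _).
have c3 : congr M X1 1 := nat_mod_congr (chinese_modr cpM _ _).
have c4 : congr M X2 0 := nat_mod_congr (chinese_modr cpM _ _).
set u : int * int := (X1%:Z, X2%:Z).
have Nr : ((normO d u)%:~R : 'F_p) = r.
  rewrite (congr_Fp pp (M := p) _ (normO_congr d (u := u) (u' := ((val a)%:Z, (val b)%:Z)) c1 c2)) //.
  rewrite -hab /normO /= rmorphB rmorphD !rmorphM /=.
  have ea : ((val a)%:Z)%:~R = a :> 'F_p := natr_Zp a.
  have eb : ((val b)%:Z)%:~R = b :> 'F_p := natr_Zp b.
  by rewrite ea eb.
have NM : congr M (normO d u) 1.
  by rewrite -(normO1 d); apply: normO_congr.
exists (toRes m u); split.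
  apply: unit_of_norm.
  rewrite -(partnC p (ltn0Sn m)) PoszM coprimezMr; apply/andP; split.
    rewrite coprimezE absz_nat coprime_sym p_part; apply: coprimeXl.
    by rewrite prime_coprime // -Fp_int_eq0 // Nr.
  case: NM => k e; apply/coprimezP; exists (1, - k) => /=; rewrite e; ring.
move=> j; have [qp qo qd qf] := Pl_prop (Pl_nth j).
case: (eqVneq j i) => [->|nji].
  by rewrite /chi Np_toRes // -/p Nr hr neg1_neq1.
set q := nth 0%N Pl j in qp qo qd qf *.
have qnp : q != p.
  rewrite /q /p nth_uniq ?ltn_ord //; last by apply: filter_uniq; exact: primes_uniq.
have qM : (q %| M)%N.
  have : (q %| f`_p * M)%N by rewrite partnC.
  rewrite Gauss_dvdr // p_part; apply: coprimeXr.
  by rewrite prime_coprime // dvdn_prime2.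
rewrite /chi Np_toRes //.
have -> : ((normO d u)%:~R : 'F_q) = 1.
  rewrite (congr_Fp qp (M := M) _ NM) //.
by rewrite expr1n eqxx.
Qed.

Lemma Phi_surj v : exists x, unitR d m x /\ Phi x = v.
Proof.
pose P (v : 'rV['F_2]_s) := exists x, unitR d m x /\ Phi x = v.
suff : P v by [].
rewrite (row_sum_delta v); apply: (big_ind P).
- by exists one; rewrite unitR1 Phi_one.
- move=> v1 v2 [x1 [u1 e1]] [x2 [u2 e2]]; exists (mulR x1 x2).
  by rewrite unitRM // Phi_mul // e1 e2.
- move=> i _; case: (F2_cases (v 0 i)) => ->; first by rewrite scale0r; exists one; rewrite unitR1 Phi_one.
  rewrite scale1r; have [x [ux hx]] := Phi_basis i; exists x; split => //.
  by apply/rowP => j; rewrite !mxE hx eqxx andTb.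
Qed.

Definition fib (v : 'rV['F_2]_s) : {set Res m} := [set x | unitR d m x && (Phi x == v)].

Lemma fib_le v w : (#|fib v| <= #|fib w|)%N.
Proof.
have [g [ug hg]] := Phi_surj (w + v).
have inj : {in fib v &, injective (mulR g)} by move=> x y _ _; apply: unitR_cancel.
rewrite -(card_in_imset inj); apply: subset_leq_card; apply/subsetP => y.
case/imsetP => x; rewrite !inE => /andP[ux /eqP hx] ->.
by rewrite unitRM // Phi_mul // hg hx -addrA F2_vv addr0 eqxx.
Qed.

Lemma card_units : #|[set x | unitR d m x]| = (2 ^ s * #|fib 0|)%N.
Proof.
rewrite -sum1_card (partition_big (Phi) xpredT) //=.
rewrite (eq_bigr (fun _ => #|fib 0|)); last first.
  move=> v _; rewrite sum1_card.
  have -> : #|[pred x | (x \in [set x | unitR d m x]) && (Phi x == v)]| = #|fib v|.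
    by apply: eq_card => x; rewrite !inE.
  by apply/eqP; rewrite eqn_leq !fib_le.
by rewrite sum_nat_const card_mx card_Fp // mul1n.
Qed.

Lemma card_Kset : (2 ^ s * #|Kset d m| <= 2 * (f * f))%N.
Proof.
have h1 : (#|Kset d m| <= 2 * #|fib 0|)%N.
  apply: leq_trans (_ : #|fib 0 :|: fib (wv d m)| <= _)%N.
    apply: subset_leq_card; apply/subsetP => x; rewrite !inE => /andP[ux /orP[]->];
      by rewrite ux ?orbT.
  apply: leq_trans (leq_card_setU _ _) _.
  by rewrite mul2n -addnn leq_add2l fib_le.
have h2 : (#|[set x | unitR d m x]| <= f * f)%N.
  by apply: leq_trans (max_card _) _; rewrite card_prod card_ord.
rewrite card_units in h2.
apply: leq_trans (_ : 2 ^ s * (2 * #|fib 0|) <= _)%N; first by rewrite leq_mul2l h1 orbT.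
by rewrite mulnCA leq_mul2l h2 orbT.
Qed.

End Surj.

Local Close Scope ring_scope.


Lemma prod_primes n : (0 < n)%N -> n = (\prod_(p <- primes n) p ^ logn p n)%N.
Proof. by move=> n0; rewrite {1}(prod_prime_decomp n0) prime_decompE big_map. Qed.

Lemma prod_cond (P : pred nat) (r : seq nat) a b :
  (\prod_(p <- r) (if P p then a else b) = a ^ count P r * b ^ count (predC P) r)%N.
Proof.
elim: r => [|x r IH]; first by rewrite big_nil.
rewrite big_cons IH /=; case: (P x) => /=; rewrite ?expnS; ring.
Qed.

Lemma totient_bound (d : int) m : (d != 0)%R ->
  (m.+1 * 2 ^ sP d m <= totient m.+1 * (3 ^ sP d m * 2 ^ size (primes (2 * `|d|))))%N.
Proof.
move=> d0; set f := m.+1; set G := good d.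
have ef : f = (\prod_(p <- primes f) p ^ logn p f)%N by apply: prod_primes.
have es : sP d m = count G (primes f) by rewrite /sP /Pl size_filter.
have eb : (count (predC G) (primes f) <= size (primes (2 * `|d|)))%N.
  rewrite -size_filter; apply: uniq_leq_size; first by apply: filter_uniq; apply: primes_uniq.
  move=> p; rewrite mem_filter mem_primes /= => /andP[hG /andP[pp pf]].
  rewrite mem_primes pp muln_gt0 /= absz_gt0 d0 /=.
  move: hG; rewrite /G /good negb_and negbK => /orP[ev|pd].
  - have p2 : p = 2%N by apply/(prime_oddPn pp).
    by rewrite p2 dvdn_mulr.
  - by rewrite dvdn_mull.
have e2 : (2 ^ count G (primes f) = \prod_(p <- primes f) (if G p then 2 else 1))%N.
  by rewrite prod_cond exp1n muln1.
rewrite {1}ef totientE // es e2 -big_split /=.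
apply: (@leq_trans (\prod_(p <- primes f) (p.-1 * p ^ (logn p f).-1) *
   \prod_(p <- primes f) (if G p then 3 else 2))%N).
  rewrite -!big_split /= big_seq [X in (_ <= X)%N]big_seq; apply: leq_prod => p hp.
  have pp : prime p by move: hp; rewrite mem_primes => /andP[].
  have := hp; rewrite -logn_gt0; case: (logn p f) => [|e] // _ /=.
  rewrite expnS mulnAC [X in (_ <= X)%N]mulnAC leq_mul2r; apply/orP; right.
  have p2 := prime_gt1 pp.
  case hG : (G p).
    have : odd p by move: hG; rewrite /G /good => /andP[].
    move=> po; have := odd_prime_gt2 po pp; lia.
  lia.
rewrite leq_mul2l; apply/orP; right.
rewrite prod_cond leq_mul2l; apply/orP; right; exact: leq_pexp2l.
Qed.


Section Final.
Variables (d : int) (m : nat).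
Local Notation f := (m.+1).
Local Notation mulR := (mulR d m).
Local Notation one := (oneR m).

Lemma Zsub_Hsub : Zsub d m \subset Hsub d m.
Proof. by apply: gen_mono; apply: subsetUl. Qed.

Lemma Zsub_unit : Zsub d m \subset [set y | unitR d m y].
Proof. by apply/subsetP => x hx; rewrite inE; apply: gen_unit (intImg_unit d m) hx. Qed.

Lemma Hsub_unit : Hsub d m \subset [set y | unitR d m y].
Proof.
apply/subsetP => x hx; rewrite inE; apply: gen_unit hx.
by rewrite subUset intImg_unit unitImg_unit.
Qed.

Lemma card_Zsub : (totient f <= #|Zsub d m|)%N.
Proof.
have e : totient f = #|[pred i : 'I_f | coprime f i]|.
  rewrite totient_count_coprime big_mkord -sum1_card [RHS]big_mkcond.
  by apply: eq_bigr => i _; rewrite inE; case: (coprime f i).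
rewrite e; set S := [pred i : 'I_f | _].
have inj : {in S &, injective (fun i : 'I_f => toRes m (Posz (i : nat), 0%R))}.
  move=> i j _ _ /(congr1 (fun x => val x.1)) /=.
  rewrite !modz_nat !absz_nat !modn_small ?ltn_ord // => e'; exact: val_inj.
rewrite -(card_in_imset inj); apply: subset_leq_card; apply/subsetP => y.
case/imsetP => i hi ->; apply: (subsetP (genA d _)); rewrite inE; apply/asboolP.
by exists (Posz (i : nat)); split => //; rewrite absz_nat coprime_sym.
Qed.

Lemma class_eq x : unitR d m x ->
  preCl_class d m x = [set mulR x z | z in Zsub d m].
Proof.
move=> ux; apply/setP => y; rewrite inE; apply/existsP/imsetP.
- by case=> z /andP[hz /eqP ->]; exists z.
- by case=> z hz ->; exists z; rewrite hz eqxx.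
Qed.

Lemma card_class x : unitR d m x -> #|preCl_class d m x| = #|Zsub d m|.
Proof.
move=> ux; rewrite class_eq // card_in_imset // => a b _ _; exact: unitR_cancel.
Qed.

Lemma class_sub x : x \in unitImg d m -> preCl_class d m x \subset Hsub d m.
Proof.
move=> hx; have ux : unitR d m x by move/(subsetP (unitImg_unit d m)): hx; rewrite inE.
rewrite class_eq //; apply/subsetP => y /imsetP[z hz ->].
apply: genM; first by apply: (subsetP (genA d _)); rewrite in_setU hx orbT.
exact: (subsetP Zsub_Hsub).
Qed.

Lemma class_shift x y : unitR d m x -> unitR d m y ->
  (exists2 w, w \in preCl_class d m x & w \in preCl_class d m y) ->
  preCl_class d m x \subset preCl_class d m y.
Proof.
move=> ux uy [w]; rewrite !class_eq // => /imsetP[z1 hz1 ->] /imsetP[z2 hz2 e].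
have [z1' e1] : exists z1', mulR z1 z1' = one.
  by apply/unitRP; apply: (gen_unit (intImg_unit d m) hz1).
have hz1' : z1' \in Zsub d m by apply: genV hz1 e1.
apply/subsetP => v /imsetP[z hz ->]; apply/imsetP.
exists (mulR z2 (mulR z1' z)); first by apply: genM => //; apply: genM.
by rewrite mulRA -e -mulRA [mulR z1 (mulR z1' z)]mulRA e1 mul1R.
Qed.

Lemma ell_bound : (ell d m * #|Zsub d m| <= #|Hsub d m|)%N.
Proof.
set P := [set preCl_class d m x | x in unitImg d m].
have triv : trivIset P.
  apply/trivIsetP => A B /imsetP[x hx ->] /imsetP[y hy ->] neq.
  have ux : unitR d m x by move/(subsetP (unitImg_unit d m)): hx; rewrite inE.
  have uy : unitR d m y by move/(subsetP (unitImg_unit d m)): hy; rewrite inE.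
  rewrite -setI_eq0; apply/negPn/negP => /set0Pn[w]; rewrite inE => /andP[wA wB].
  move/negP: neq; apply; rewrite eqEsubset; apply/andP; split.
  - by apply: class_shift => //; exists w.
  - by apply: class_shift => //; exists w.
have := leq_card_cover P => -[_]; rewrite triv => /eqP ecov.
have : (#|cover P| <= #|Hsub d m|)%N.
  apply: subset_leq_card; apply/bigcupsP => A /imsetP[x hx ->]; exact: class_sub.
rewrite ecov (eq_bigr (fun _ => #|Zsub d m|)); last first.
  move=> A /imsetP[x hx ->]; apply: card_class.
  by move/(subsetP (unitImg_unit d m)): hx; rewrite inE.
by rewrite sum_nat_const.
Qed.

Lemma ell_gt0 : (0 < ell d m)%N.
Proof.
apply/card_gt0P; exists (preCl_class d m one); apply/imsetP; exists one => //.
rewrite inE; apply/asboolP; exists (1%R, 0%R); split => //.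
by exists (1%R, 0%R); rewrite mul1O.
Qed.

End Final.


Lemma pow_aux s : ((s + 4) * 3 ^ s <= 4 * 4 ^ s)%N.
Proof.
elim: s => [//|s IH].
have h : (3 ^ s <= 4 ^ s)%N.
  by elim: (s) => // k IHk; rewrite !expnS; apply: leq_mul.
rewrite !expnS; nia.
Qed.

Lemma arith D ell phi Z H K n2 s f c :
  (D <= s.+1 * n2)%N -> (n2 * H <= K)%N -> (ell * Z <= H)%N -> (phi <= Z)%N ->
  (2 ^ s * K <= 2 * (f * f))%N -> (f * 2 ^ s <= phi * (3 ^ s * c))%N -> (0 < phi)%N ->
  (D * ell <= 8 * c * f)%N.
Proof.
move=> h1 h2 h3 h4 h5 h6 h7.
have hS : (s.+1 * 3 ^ s <= 4 * 4 ^ s)%N.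
  by apply: leq_trans (pow_aux s); rewrite leq_mul2r; apply/orP; right; lia.
have e1 : (D * ell * phi <= s.+1 * K)%N.
  apply: (@leq_trans (s.+1 * n2 * (ell * Z))); first by rewrite -mulnA; apply: leq_mul => //; apply: leq_mul.
  rewrite -mulnA leq_mul2l; apply/orP; right.
  by apply: leq_trans _ h2; rewrite leq_mul2l h3 orbT.
have e2 : (D * ell * phi * (2 ^ s * 2 ^ s) <= s.+1 * (2 * (f * f)) * 2 ^ s)%N.
  apply: (@leq_trans (s.+1 * K * (2 ^ s * 2 ^ s))); first by apply: leq_mul.
  have -> : (s.+1 * K * (2 ^ s * 2 ^ s) = (s.+1 * 2 ^ s) * (2 ^ s * K))%N by ring.
  have -> : (s.+1 * (2 * (f * f)) * 2 ^ s = (s.+1 * 2 ^ s) * (2 * (f * f)))%N by ring.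
  by rewrite leq_mul2l h5 orbT.
have e3 : (s.+1 * (2 * (f * f)) * 2 ^ s <= 2 * f * phi * c * (s.+1 * 3 ^ s))%N.
  have : (s.+1 * (2 * (f * f)) * 2 ^ s = 2 * f * s.+1 * (f * 2 ^ s))%N by ring.
  move=> ->; apply: (@leq_trans (2 * f * s.+1 * (phi * (3 ^ s * c)))).
    by rewrite leq_mul2l h6 orbT.
  by apply: eq_leq; ring.
have e4 : (2 * f * phi * c * (s.+1 * 3 ^ s) <= 2 * f * phi * c * (4 * 4 ^ s))%N.
  by rewrite leq_mul2l hS orbT.
have := leq_trans e2 (leq_trans e3 e4).
have -> : (2 * f * phi * c * (4 * 4 ^ s) = (8 * c * f) * (phi * (2 ^ s * 2 ^ s)))%N.
  by rewrite -expnMn; ring.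
rewrite -mulnA leq_pmul2r //.
by rewrite muln_gt0 h7 muln_gt0 !expn_gt0.
Qed.


Lemma Phi_prod d m (t : seq (Res m)) : all (unitR d m) t ->
  Phi d m (prodR d m t) = (\sum_(x <- map (Phi d m) t) x)%R.
Proof.
elim: t => [|x t IH] /=; first by rewrite big_nil Phi_one.
move=> /andP[ux ut]; rewrite big_cons -IH // Phi_mul //; exact: prodR_unit.
Qed.

Lemma main_nat d m : quad_field_disc d ->
  (davenport_prinCl d m * ell d m <= 8 * 2 ^ size (primes (2 * `|d|)) * m.+1)%N.
Proof.
move=> hd; have d0 : (d != 0)%R by case: hd.
set s := sP d m; set H := Hsub d m; set K := Kset d m.
have HK : H \subset K := Hsub_K d m.
have H0 : (0 < #|H|)%N by apply/card_gt0P; exists (oneR m); apply: gen1.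
have HKc : (#|H| <= #|K|)%N := subset_leq_card HK.
set n2 := (#|K| %/ #|H|)%N.
have n20 : (0 < n2)%N by rewrite divn_gt0.
have hcard : (#|K| < n2.+1 * #|H|)%N.
  have := ltn_pmod #|K| H0; have := divn_eq #|K| #|H|; rewrite -/n2; lia.
have zs : prinCl_zs d m (s.+1 * n2).
  move=> sq ssq usq.
  have := @blocks d m H K s.+1 n2 _ _ sq ssq usq.
  case; last by move=> msk hmsk; exists msk.
  - move=> t st ut.
    have sv : size (map (Phi d m) t) = s.+1 by rewrite size_map.
    have [msk [sm hm e]] := F2_dep sv.
    exists msk; split => //.
    rewrite inE prodR_unit ?all_mask //= Phi_prod ?all_mask // map_mask e eqxx //.
  - move=> t st tK.
    apply: (pigeon (K := K)) => //.
    + by rewrite subUset intImg_unit unitImg_unit.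
    + exact: Kset_one.
    + exact: Kset_mul.
    + exact: Kset_unit.
have hD : (davenport_prinCl d m <= s.+1 * n2)%N.
  by apply: davenport_le => //; rewrite muln_gt0 n20.
apply: (arith (Z := #|Zsub d m|) (H := #|H|) (K := #|K|) (phi := totient m.+1) hD).
- by rewrite /n2 leq_divM.
- exact: ell_bound.
- exact: card_Zsub.
- exact: card_Kset.
- exact: totient_bound.
- by rewrite totient_gt0.
Qed.


Unset Implicit Arguments.
Local Open Scope ring_scope.

(* f = m.+1 ranges over all positive integers. *)
Theorem proposition3p1 (d : int) (hd : quad_field_disc d) :
  exists C : rat, 0 < C /\
    forall m : nat,
      (davenport_prinCl d m)%:R <= C * (m.+1)%:R / (ell d m)%:R.
Proof.
exists (8 * 2 ^ size (primes (2 * `|d|)))%N%:R; split.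
  by rewrite ltr0n muln_gt0 expn_gt0.
move=> m; have e0 : (0 : rat) < (ell d m)%:R by rewrite ltr0n; apply: ell_gt0.
rewrite ler_pdivlMr // -!natrM ler_nat.
exact: main_nat.
Qed.
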